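(* Let $\gamma,\delta$ be constants and $u_0,u_1$ nonzero constants. Let $\mathfrak p_n,\mathfrak q_n$ be the $7$-periodic integer sequences with $\mathfrak p_n=1$ if $n\equiv1$ or $5\pmod 7$ and $\mathfrak p_n=0$ otherwise, and $\mathfrak q_n=1$ if $n\equiv 0,3$ or $6\pmod 7$ and $\mathfrak q_n=0$ otherwise. Let $(d_n)_{n\in\mathbb Z}$ be a sequence of nonzero numbers satisfying the non-autonomous Somos-5 recurrence $$d_{n-3}d_{n+2}=\gamma_n\,d_{n-2}d_{n+1}+\delta_n\,d_{n-1}d_n,\qquad \gamma_n=\gamma\,u_0^{\mathfrak p_{n+1}}u_1^{\mathfrak p_{n-3}},\quad \delta_n=\delta\,u_0^{\mathfrak q_{n+1}}u_1^{\mathfrak q_{n-3}},$$ and let $(\eta_n)_{n\in\mathbb Z}$ be an integer sequence satisfying $\eta_{n+3}-\eta_{n+2}-\eta_{n+1}+\eta_n=\mathfrak p_n-\mathfrak q_n$ for all $n$. Define $$k_n=u_0^{\eta_{n+3}+\eta_n}u_1^{\eta_{n-1}+\eta_{n-4}}\,d_nd_{n-3},\qquad l_n=u_0^{\eta_{n+2}+\eta_{n+1}}u_1^{\eta_{n-2}+\eta_{n-3}}\,d_{n-1}d_{n-2}.$$ Then $(k_n,l_n)$ satisfies the system $$k_{n+1}k_{n-1}=\gamma\,k_nl_n+\delta\,l_n^2,\qquad l_{n+1}l_{n-1}=k_nl_n.$$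
   Context: This is the special case $a_1=a_3=0$, $a_2=1$, $a_5=\gamma$, $a_6=\delta$ of the system $k_{n+1}k_{n-1}=a_3k_n^2+a_5k_nl_n+a_6l_n^2$, $l_{n+1}l_{n-1}=a_1k_n^2+a_2k_nl_n+a_3l_n^2$. *)

(* Defs.v *)
From HB Require Import structures.
From mathcomp Require Import all_boot all_order all_algebra.
Set Implicit Arguments. Unset Strict Implicit. Unset Printing Implicit Defensive.
Import Order.TTheory GRing.Theory Num.Theory.
Local Open Scope ring_scope.

Definition frakp (n : int) : nat :=
  let r := (n %% 7)%Z in if (r == 1) || (r == 5) then 1%N else 0%N.

Definition frakq (n : int) : nat :=
  let r := (n %% 7)%Z in if [|| r == 0, r == 3 | r == 6] then 1%N else 0%N.

(* Main.v *)
Require Import Defs.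
From HB Require Import structures.
From mathcomp Require Import all_boot all_order all_algebra.
From mathcomp Require Import zify ring lra.
Import Order.TTheory GRing.Theory Num.Theory.
Local Open Scope ring_scope.

Lemma frakp_mod (m j : int) : frakp (m + j) = frakp ((m %% 7)%Z + j).
Proof. by rewrite /frakp modzDml. Qed.
Lemma frakq_mod (m j : int) : frakq (m + j) = frakq ((m %% 7)%Z + j).
Proof. by rewrite /frakq modzDml. Qed.
Lemma frakp_mod0 (m : int) : frakp m = frakp ((m %% 7)%Z).
Proof. by rewrite /frakp modz_mod. Qed.

Lemma ident (m : int) :
  (frakp m)%:Z + (frakp (m + 1))%:Z + (frakp (m - 1))%:Z
  = (frakq (m + 1))%:Z + (frakq (m - 1))%:Z.
Proof.
rewrite frakp_mod0 (frakp_mod m 1) (frakp_mod m (-1)) (frakq_mod m 1) (frakq_mod m (-1)).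
have h0 : 0 <= (m %% 7)%Z by apply: modz_ge0.
have h7 : (m %% 7)%Z < 7 by apply: ltz_pmod.
case: (m %% 7)%Z h0 h7 => [k|k] //= _.
do 7! (case: k => [|k] //=).
Qed.

Lemma expsplit (F : fieldType) (x : F) (a b c d : int) (e : nat) :
  x != 0 -> a + b = c + d + e%:Z -> x ^ a * x ^ b = x ^ c * x ^ d * x ^+ e.
Proof. by move=> x0 h; rewrite exprnP -!expfzDr // h. Qed.

Theorem theorem5 (F : fieldType) (gamma delta u0 u1 : F)
    (d : int -> F) (eta : int -> int) :
  u0 != 0 -> u1 != 0 ->
  (forall n : int, d n != 0) ->
  (forall n : int,
      d (n - 3) * d (n + 2) =
        (gamma * u0 ^+ frakp (n + 1) * u1 ^+ frakp (n - 3)) * d (n - 2) * d (n + 1)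
      + (delta * u0 ^+ frakq (n + 1) * u1 ^+ frakq (n - 3)) * d (n - 1) * d n) ->
  (forall n : int,
      eta (n + 3) - eta (n + 2) - eta (n + 1) + eta n
        = (frakp n)%:Z - (frakq n)%:Z) ->
  let k := fun n : int =>
    u0 ^ (eta (n + 3) + eta n) * u1 ^ (eta (n - 1) + eta (n - 4)) * d n * d (n - 3) in
  let l := fun n : int =>
    u0 ^ (eta (n + 2) + eta (n + 1)) * u1 ^ (eta (n - 2) + eta (n - 3)) * d (n - 1) * d (n - 2) in
  forall n : int,
    k (n + 1) * k (n - 1) = gamma * k n * l n + delta * l n ^+ 2 /\
    l (n + 1) * l (n - 1) = k n * l n.
Proof.
move=> u0n u1n dn H He k l n.
have s1 : n+1+3 = n+4 by lia.
have s2 : n+1-1 = n by lia.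
have s3 : n+1-4 = n-3 by lia.
have s4 : n+1-3 = n-2 by lia.
have s5 : n+1+2 = n+3 by lia.
have s6 : n+1+1 = n+2 by lia.
have s7 : n+1-2 = n-1 by lia.
have s8 : n-1+3 = n+2 by lia.
have s9 : n-1-1 = n-2 by lia.
have s10 : n-1-4 = n-5 by lia.
have s11 : n-1-3 = n-4 by lia.
have s12 : n-1+2 = n+1 by lia.
have s13 : n-1+1 = n by lia.
have s14 : n-1-2 = n-3 by lia.
have s15 : n-3+3 = n by lia.
have s16 : n-3+2 = n-1 by lia.
have s17 : n-3+1 = n-2 by lia.
have s18 : n-4+3 = n-1 by lia.
have s19 : n-4+2 = n-2 by lia.
have s20 : n-4+1 = n-3 by lia.
have s21 : n-5+3 = n-2 by lia.
have s22 : n-5+2 = n-3 by lia.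
have s23 : n-5+1 = n-4 by lia.
have s24 : n-4-1 = n-5 by lia.
have s25 : n-4-3 = n-7 by lia.
have s26 : n+1-5 = n-4 by lia.
have s27 : n-1+4 = n+3 by lia.
have s28 : n-1-5 = n-6 by lia.
have D1 := He (n+1). have D2 := He n. have D3 := He (n-1).
have D4 := He (n-3). have D5 := He (n-4). have D6 := He (n-5).
have I1 := ident n. have I2 := ident (n-4).
have R := H (n-1).
rewrite /k /l.
rewrite ?s1 ?s2 ?s3 ?s4 ?s5 ?s6 ?s7 ?s8 ?s9 ?s10 ?s11 ?s12 ?s13 ?s14 ?s15 ?s16 ?s17 ?s18
  ?s19 ?s20 ?s21 ?s22 ?s23 ?s24 ?s25 ?s26 ?s27 ?s28
  in D1 D2 D3 D4 D5 D6 I1 I2 R *.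
split.
- have K1 : u0 ^ (eta (n+3) + eta n) * u0 ^ (eta (n+2) + eta (n+1))
     = u0 ^ (eta (n+4) + eta (n+1)) * u0 ^ (eta (n+2) + eta (n-1)) * u0 ^+ frakp n.
    by apply: expsplit => //; lia.
  have K2 : u1 ^ (eta (n-1) + eta (n-4)) * u1 ^ (eta (n-2) + eta (n-3))
     = u1 ^ (eta n + eta (n-3)) * u1 ^ (eta (n-2) + eta (n-5)) * u1 ^+ frakp (n-4).
    by apply: expsplit => //; lia.
  have K3 : u0 ^ (eta (n+2) + eta (n+1)) * u0 ^ (eta (n+2) + eta (n+1))
     = u0 ^ (eta (n+4) + eta (n+1)) * u0 ^ (eta (n+2) + eta (n-1)) * u0 ^+ frakq n.
    by apply: expsplit => //; lia.
  have K4 : u1 ^ (eta (n-2) + eta (n-3)) * u1 ^ (eta (n-2) + eta (n-3))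
     = u1 ^ (eta n + eta (n-3)) * u1 ^ (eta (n-2) + eta (n-5)) * u1 ^+ frakq (n-4).
    by apply: expsplit => //; lia.
  set A := u0 ^ (eta (n+4) + eta (n+1)) in K1 K2 K3 K4 *.
  set B := u0 ^ (eta (n+2) + eta (n-1)) in K1 K2 K3 K4 *.
  set C := u1 ^ (eta n + eta (n-3)) in K1 K2 K3 K4 *.
  set D := u1 ^ (eta (n-2) + eta (n-5)) in K1 K2 K3 K4 *.
  set P := u0 ^ (eta (n+3) + eta n) in K1 K2 K3 K4 *.
  set Q := u0 ^ (eta (n+2) + eta (n+1)) in K1 K2 K3 K4 *.
  set S := u1 ^ (eta (n-1) + eta (n-4)) in K1 K2 K3 K4 *.
  set T := u1 ^ (eta (n-2) + eta (n-3)) in K1 K2 K3 K4 *.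
  clearbody A B C D P Q S T.
  transitivity (A * B * C * D * d (n-1) * d (n-2) * (d (n-4) * d (n+1))); first by ring.
  rewrite R.
  have -> : gamma * (P * S * d n * d (n - 3)) * (Q * T * d (n - 1) * d (n - 2))
     = gamma * (P * Q) * (S * T) * (d n * d (n - 3) * d (n - 1) * d (n - 2)) by ring.
  have -> : (Q * T * d (n - 1) * d (n - 2)) ^+ 2
     = (Q * Q) * (T * T) * (d (n - 1) * d (n - 2)) ^+ 2 by ring.
  rewrite K1 K2 K3 K4; ring.
- have L1 : u0 ^ (eta (n+3) + eta (n+2)) * u0 ^ (eta (n+1) + eta n)
     = u0 ^ (eta (n+3) + eta n) * u0 ^ (eta (n+2) + eta (n+1)) * u0 ^+ 0.
    by apply: expsplit => //; lia.
  have L2 : u1 ^ (eta (n-1) + eta (n-2)) * u1 ^ (eta (n-3) + eta (n-4))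
     = u1 ^ (eta (n-1) + eta (n-4)) * u1 ^ (eta (n-2) + eta (n-3)) * u1 ^+ 0.
    by apply: expsplit => //; lia.
  rewrite !expr0 !mulr1 in L1 L2.
  move: L1 L2.
  move: (u0 ^ (eta (n+3) + eta (n+2))) (u0 ^ (eta (n+1) + eta n)) (u0 ^ (eta (n+3) + eta n))
    (u0 ^ (eta (n+2) + eta (n+1))) (u1 ^ (eta (n-1) + eta (n-2))) (u1 ^ (eta (n-3) + eta (n-4)))
    (u1 ^ (eta (n-1) + eta (n-4))) (u1 ^ (eta (n-2) + eta (n-3))) => a1 a2 a3 a4 b1 b2 b3 b4 L1 L2.
  transitivity ((a1 * a2) * (b1 * b2) * (d n * d (n-1) * d (n-2) * d (n-3))); first by ring.
  rewrite L1 L2; ring.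
Qed.
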